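(* Let $G=(V,E)$ be a finite graph and let $(G_n)_{n\in\mathbb{N}}$ be a sequence with $G_0=G$, $G_n$ a $2$-lift of $G_{n-1}$, and covering maps $\pi_n:G_n\to G$, such that for every $v\in V$ and every $v_n\in\pi_n^{-1}(v)$, $(G_n,v_n)\to(T(G),v)$ in $\mathcal{G}_\star$. Then $G_n$ converges in the local weak sense to $(T(G),o)$, where $o$ is the root of $T(G)$ corresponding to a uniformly random vertex $v$ of $G$.
   Context: A $2$-lift of $G$ has vertex set $V\times\{0,1\}$ with each edge $(u,v)$ replaced either by $((u,0),(v,0)),((u,1),(v,1))$ or by $((u,0),(v,1)),((u,1),(v,0))$. $(T(G),v)$ is the tree of finite non-backtracking walks in $G$ from $v$. $\mathcal{G}_\star$ is the space of locally finite connected rooted graphs up to rooted isomorphism with distance $1/(1+r)$, $r$ the largest radius at which the balls around the roots are rooted-isomorphic. For a finite graph $H$, $\mathcal{U}(H)$ is the law on $\mathcal{G}_\star$ of $H$ restricted to the component of a uniformly random root; $H_n$ converges in the local weak sense to a random rooted graph $(T,o)$ if $\mathcal{U}(H_n)$ converges weakly to the law of $(T,o)$. *)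

(* Defs.v *)
From HB Require Import structures.
From mathcomp Require Import all_boot all_order all_algebra.
From mathcomp Require Import all_classical all_reals all_analysis.
From Stdlib Require Import Relations.
From Stdlib Require Lists.List.
Set Implicit Arguments. Unset Strict Implicit. Unset Printing Implicit Defensive.
Import Order.TTheory GRing.Theory Num.Theory.
Local Open Scope classical_set_scope.
Local Open Scope ring_scope.

Record rooted_graph := RGraph {
  rg_T : Type;
  rg_adj : rg_T -> rg_T -> Prop;
  rg_root : rg_T }.
Arguments rg_adj : clear implicits.
Arguments rg_root : clear implicits.

Definition good_rg (g : rooted_graph) : Prop :=
  (forall x y, rg_adj g x y -> rg_adj g y x) /\
  (forall x, ~ rg_adj g x x) /\
  (forall x, exists s : list (rg_T g), forall y, rg_adj g x y -> Stdlib.Lists.List.In y s) /\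
  (forall x, clos_refl_trans _ (rg_adj g) (rg_root g) x).

Fixpoint within (g : rooted_graph) (r : nat) (x : rg_T g) : Prop :=
  match r with
  | 0 => x = rg_root g
  | r'.+1 => within r' x \/ exists y, within r' y /\ rg_adj g y x
  end.

Definition ball_iso (r : nat) (g h : rooted_graph) : Prop :=
  exists (phi : rg_T g -> rg_T h) (psi : rg_T h -> rg_T g),
    phi (rg_root g) = rg_root h /\
    (forall x, within r x -> within r (phi x) /\ psi (phi x) = x) /\
    (forall y, within r y -> within r (psi y) /\ phi (psi y) = y) /\
    (forall x y, within r x -> within r y ->
       (rg_adj g x y <-> rg_adj h (phi x) (phi y))).

Definition rooted_iso (g h : rooted_graph) : Prop :=
  exists (phi : rg_T g -> rg_T h) (psi : rg_T h -> rg_T g),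
    cancel phi psi /\ cancel psi phi /\ phi (rg_root g) = rg_root h /\
    (forall x y, rg_adj g x y <-> rg_adj h (phi x) (phi y)).

(* the distance of G_star: 1/(1+r), r the largest radius with isomorphic balls
   (0 if all balls are isomorphic) *)
Definition rdist (R : realType) (g h : rooted_graph) : R :=
  inf [set (1 + r%:R)^-1 | r in [set r : nat | ball_iso r g h]].

(* f is a bounded continuous function on G_star, given on representatives *)
Definition bcont_Gstar (R : realType) (f : rooted_graph -> R) : Prop :=
  (forall g h, good_rg g -> good_rg h -> rooted_iso g h -> f g = f h) /\
  (exists M : R, forall g, good_rg g -> `|f g| <= M) /\
  (forall g, good_rg g -> forall eps : R, 0 < eps -> exists2 delta : R, 0 < delta &
     forall h, good_rg h -> rdist R g h < delta -> `|f g - f h| < eps).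

Definition comp_rg (T : finType) (e : rel T) (u : T) : rooted_graph :=
  @RGraph {x : T | connect e u x} (fun x y => e (sval x) (sval y))
          (exist _ u (connect0 e u)).

Definition is_2lift (T : finType) (e : rel T) (e' : rel (T * bool)%type) : Prop :=
  exists s : T -> T -> bool, (forall u v, s u v = s v u) /\
    forall u i v j, e' (u, i) (v, j) = e u v && (j == xorb i (s u v)).

Fixpoint liftT (V : finType) (n : nat) : finType :=
  match n with 0 => V | n'.+1 => (liftT V n' * bool)%type end.

Fixpoint proj_lift (V : finType) (n : nat) : liftT V n -> V :=
  match n return liftT V n -> V with
  | 0 => fun x => x
  | n'.+1 => fun x => proj_lift x.1
  end.

Fixpoint nonbacktrack (V : eqType) (s : seq V) : bool :=
  match s with
  | x :: ((y :: z :: _) as t) => (x != z) && nonbacktrack t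
  | _ => true
  end.

(* a walk v, s_1, ..., s_k is encoded by s = [:: s_1; ...; s_k] *)
Definition nbwalk (V : finType) (e : rel V) (v : V) (s : seq V) : bool :=
  path e v s && nonbacktrack (v :: s).

Lemma nbwalk_nil (V : finType) (e : rel V) (v : V) : nbwalk e v [::].
Proof. by []. Qed.

Definition nbtree (V : finType) (e : rel V) (v : V) : rooted_graph :=
  @RGraph {s : seq V | nbwalk e v s}
    (fun x y => (exists z, sval y = rcons (sval x) z) \/
                (exists z, sval x = rcons (sval y) z))
    (exist _ [::] (nbwalk_nil e v)).

(* Main.v *)
Require Import Defs.
From HB Require Import structures.
From mathcomp Require Import all_boot all_order all_algebra.
From mathcomp Require Import all_classical all_reals all_analysis.
From Stdlib Require Import Relations.
Import Order.TTheory GRing.Theory Num.Theory numFieldNormedType.Exports.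
Local Open Scope classical_set_scope.
Local Open Scope ring_scope.

Lemma In_of_mem (T : eqType) (x : T) (s : seq T) : x \in s -> List.In x s.
Proof.
elim: s => [|y s IH] //=; rewrite in_cons => /orP [/eqP ->|h]; [by left|by right; apply: IH].
Qed.

Lemma good_comp (T : finType) (e : rel T) (u : T) :
  (forall x y, e x y = e y x) -> (forall x, ~~ e x x) -> good_rg (comp_rg e u).
Proof.
move=> esym eirr; split; [|split; [|split]].
- by move=> x y /=; rewrite esym.
- by move=> x /=; rewrite (negbTE (eirr _)).
- move=> x; exists (enum {: {x : T | connect e u x}}) => y _.
  by apply: In_of_mem; rewrite mem_enum.
- case=> y Hy /=.
  have key : forall p a (Ha : connect e u a), path e a p ->
      forall b (Hb : connect e u b), b = last a p ->
      clos_refl_trans _ (rg_adj (comp_rg e u)) (exist _ a Ha) (exist _ b Hb).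
    elim=> [|x p IH] a Ha /=.
      move=> _ b Hb Hl; subst b. have -> : Hb = Ha by apply: eq_irrelevance.
      exact: rt_refl.
    move=> /andP [eax px] b Hb Hl.
    have Hx : connect e u x by apply: connect_trans Ha (connect1 eax).
    apply: (rt_trans _ _ _ (exist _ x Hx)); first by apply: rt_step.
    exact: IH.
  have /connectP [p pp Hl] := Hy.
  exact: (key p u (connect0 e u) pp y Hy Hl).
Qed.

Lemma nonbacktrack_rcons (V : eqType) (t : seq V) z :
  nonbacktrack (rcons t z) -> nonbacktrack t.
Proof.
elim: t => [|x [|y [|w t]] IH] //=.
by move=> /andP [-> /IH].
Qed.

Lemma good_nbtree (V : finType) (e : rel V) (v : V) : good_rg (nbtree e v).
Proof.
split; [|split; [|split]].
- by move=> x y /= [h|h]; [right|left].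
- move=> [s Hs] /= [[z h]|[z h]];
    by move: (congr1 size h); rewrite size_rcons => /= /eqP; rewrite ?(ltn_eqF (ltnSn _)) // eq_sym (ltn_eqF (ltnSn _)).
- move=> [s Hs].
  exists (pmap insub ([seq rcons s z | z <- enum V] ++ [:: rev (behead (rev s))])).
  move=> y /= Hy; apply: In_of_mem; rewrite mem_pmap_sub mem_cat.
  case: y Hy => t Ht /= [[z ->]|[z Hz]]; apply/orP; [left|right].
    by apply/mapP; exists z; rewrite ?mem_enum.
  by rewrite /= Hz rev_rcons /= revK mem_seq1.
- move=> [s Hs] /=.
  elim/last_ind: s Hs => [|s z IH] Hs.
    have -> : Hs = nbwalk_nil e v by apply: eq_irrelevance.
    exact: rt_refl.
  have Hs' : nbwalk e v s.
    move: Hs; rewrite /nbwalk rcons_path -rcons_cons => /andP [/andP [-> _]].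
    exact: nonbacktrack_rcons.
  apply: (rt_trans _ _ _ (exist _ s Hs')); first exact: IH.
  by apply: rt_step; left; exists z.
Qed.

Lemma ball_iso_sym r g h : ball_iso r g h -> ball_iso r h g.
Proof.
move=> [phi [psi [Hr [H1 [H2 H3]]]]].
exists psi, phi; split; [|split; [exact: H2|split; [exact: H1|]]].
- have wr : Defs.within r (rg_root g) by elim: (r) => [|k IH] /=; [|left].
  by rewrite -Hr; case: (H1 _ wr).
- move=> x y hx hy.
  have [hx1 hx2] := H2 x hx; have [hy1 hy2] := H2 y hy.
  by rewrite H3 // hx2 hy2.
Qed.

Lemma rdist_sym (R : realType) g h : rdist R g h = rdist R h g.
Proof.
rewrite /rdist; congr (inf _); apply/seteqP; split => x /= [r hr <-]; exists r => //;
  exact: ball_iso_sym.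
Qed.
Lemma lift_props (V : finType) (e : rel V) (G : forall n : nat, rel (liftT V n)) :
  (forall u v, e u v = e v u) -> (forall u, ~~ e u u) ->
  G 0%N = e -> (forall n : nat, is_2lift (G n) (G n.+1)) ->
  forall n, (forall x y, G n x y = G n y x) /\ (forall x, ~~ G n x x).
Proof.
move=> esym eirr G0 Hl; elim=> [|n [IHs IHi]]; first by rewrite G0.
have [s [ssym Hs]] := Hl n.
split.
- case=> u i [w j]; rewrite !Hs IHs ssym.
  by case: (G n w u); case: i; case: j; case: (s w u).
- by case=> u i; rewrite Hs (negbTE (IHi u)).
Qed.

Fixpoint mylift0 (V : finType) (n : nat) (v : V) : liftT V n :=
  match n return liftT V n with 0 => v | n'.+1 => (@mylift0 V n' v, false) end.

Arguments mylift0 : clear implicits.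
Lemma proj_mylift0 (V : finType) n (v : V) : proj_lift (mylift0 V n v) = v.
Proof. by elim: n => //. Qed.

Lemma card_lift (V : finType) n : #|liftT V n| = (#|V| * 2 ^ n)%N.
Proof.
elim: n => [|n IH]; first by rewrite muln1.
have -> : #|liftT V n.+1| = #|{: liftT V n * bool}| by [].
by rewrite card_prod card_bool IH expnS mulnCA mulnC.
Qed.

Lemma sum_lift (R : realType) (V : finType) (g : V -> R) n :
  \sum_(u : liftT V n) g (proj_lift u) = (2 ^ n)%:R * \sum_(v : V) g v.
Proof.
elim: n => [|n IH]; first by rewrite mul1r.
have -> : \sum_(u : liftT V n.+1) g (proj_lift u) =
          \sum_(u : liftT V n * bool) g (proj_lift u.1) by [].
rewrite -(pair_big xpredT xpredT (fun x (b : bool) => g (proj_lift x))) /=.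
under eq_bigr => x _ do rewrite big_bool /=.
rewrite big_split /= IH expnS natrM.
by rewrite -mulr2n -mulrA [RHS]mulr_natl.
Qed.
Theorem proposition4p13 (R : realType) (V : finType) (e : rel V)
  (G : forall n : nat, rel (liftT V n)) :
  (forall u v, e u v = e v u) -> (forall u, ~~ e u u) ->
  G 0%N = e ->
  (forall n : nat, is_2lift (G n) (G n.+1)) ->
  (forall (v : V) (w : forall n : nat, liftT V n),
     (forall n, proj_lift (w n) = v) ->
     (fun n => rdist R (comp_rg (G n) (w n)) (nbtree e v)) @ \oo --> (0 : R)) ->
  forall f : rooted_graph -> R, bcont_Gstar f ->
    (fun n => (#|liftT V n|%:R)^-1 * \sum_(u : liftT V n) f (comp_rg (G n) u))
      @ \oo --> ((#|V|%:R)^-1 * \sum_(v : V) f (nbtree e v) : R).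
Proof.
move=> esym eirr G0 Hl Hconv f [fiso [_ fcont]].
have HG := @lift_props V e G esym eirr G0 Hl.
have per_v : forall v (eps : R), 0 < eps -> exists N, forall n (u : liftT V n),
    (N <= n)%N -> proj_lift u = v ->
    `|f (comp_rg (G n) u) - f (nbtree e v)| <= eps.
  move=> v eps epos.
  have [delta dpos Hd] := fcont (nbtree e v) (@good_nbtree V e v) eps epos.
  pose dev n (u : liftT V n) := `|f (comp_rg (G n) u) - f (nbtree e v)|.
  pose w (n : nat) : liftT V n := extremum (fun x y : R => y <= x) (mylift0 V n v)
     (fun u => proj_lift u == v) (dev n).
  have Hw : forall n, proj_lift (w n) = v /\
      forall u, proj_lift u = v -> dev n u <= dev n (w n).
    move=> n; rewrite /w; case: extremumP.
    - exact: lexx.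
    - by move=> x y z hyx hzy; apply: le_trans hzy hyx.
    - by move=> x y; apply: le_total.
    - by rewrite proj_mylift0.
    by move=> i /eqP -> Hi; split => // u /eqP; apply: Hi.
  have := Hconv v w (fun n => (Hw n).1).
  move/cvgrPdist_lt => /(_ delta dpos) [N _ HN].
  exists N => n u Nn pu.
  have hr := HN n Nn; rewrite /= sub0r normrN in hr.
  have [Gs Gi] := HG n.
  have := Hd (comp_rg (G n) (w n)) (@good_comp _ (G n) (w n) Gs Gi).
  rewrite rdist_sym => /(_ (le_lt_trans (ler_norm _) hr)) hlt.
  apply: le_trans ((Hw n).2 u pu) _.
  by rewrite /dev distrC ltW.
apply/cvgrPdist_le => eps epos.
have /choice [Nf HN] := fun v => per_v v eps epos.
exists (\max_v Nf v)%N => // n /= Hn.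
have card0 : #|liftT V n|%:R = #|V|%:R * (2 ^ n)%:R :> R by rewrite card_lift natrM.
have p2 : (2 ^ n)%:R != 0 :> R by rewrite pnatr_eq0 expn_eq0.
have -> : (#|V|%:R)^-1 * \sum_v f (nbtree e v) =
    (#|liftT V n|%:R)^-1 * \sum_(u : liftT V n) f (nbtree e (proj_lift u)).
  rewrite (@sum_lift R V (fun v => f (nbtree e v)) n) card0 invfM mulrA -[_ * _^-1 * _]mulrA mulVf //.
  by rewrite mulr1.
rewrite -mulrBr -sumrB normrM.
have [c0|cpos] := eqVneq (#|liftT V n|) 0%N.
  by rewrite c0 invr0 normr0 mul0r ltW.
have hb : `|\sum_(u : liftT V n) (f (nbtree e (proj_lift u)) - f (comp_rg (G n) u))|
    <= eps *+ #|liftT V n|.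
  apply: le_trans (ler_norm_sum _ _ _) _.
  rewrite -sumr_const; apply: ler_sum => u _.
  rewrite distrC; apply: (HN (proj_lift u) n u) => //.
  by apply: leq_trans Hn; exact: (leq_bigmax (F := Nf) (proj_lift u)).
apply: le_trans (ler_wpM2l (normr_ge0 _) hb) _.
rewrite ger0_norm ?invr_ge0 // -(mulr_natr eps) mulrCA.
by rewrite mulVf ?pnatr_eq0 // mulr1.
Qed.
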